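(* Let ${\cal G}$ be a Hopf algebra over a field ${\bf k}$, regarded as a right ${\cal G}$-comodule algebra via its comultiplication $\Delta_{\cal G}$. Then there is no left Ore set $T\subset{\cal G}$ for which the localization $i_T:{\cal G}\to T^{-1}{\cal G}$ is nontrivial (i.e. not an isomorphism) and $\Delta_{\cal G}$ extends to a coaction $\Delta_T$ on $T^{-1}{\cal G}$ making it a right ${\cal G}$-comodule algebra with $\Delta_T\circ i_T=(i_T\otimes{\rm id})\circ\Delta_{\cal G}$.
   Context: A left Ore set is a multiplicative subset $T\subset{\cal G}\setminus\{0\}$ satisfying the left Ore condition ($\forall t\in T,r\in{\cal G}\ \exists t'\in T, r'\in{\cal G}: r't=t'r$) and left reversibility; $T^{-1}{\cal G}$ is the ring of left fractions and $i_T$ the localization map. *)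

(* Defs.v *)
From HB Require Import structures.
From mathcomp Require Import all_boot all_algebra.
Set Implicit Arguments. Unset Strict Implicit. Unset Printing Implicit Defensive.
Import GRing.Theory.
Local Open Scope ring_scope.

Section Defs.
Variable k : fieldType.

Definition lin (V U : lmodType k) (f : V -> U) : Prop :=
  forall (a : k) (u v : V), f (a *: u + v) = a *: f u + f v.

Definition bilin (V W U : lmodType k) (f : V -> W -> U) : Prop :=
  (forall v, lin (f v)) /\ (forall w, lin (fun v => f v w)).

Definition is_tensor (V W C : lmodType k) (t : V -> W -> C) : Prop :=
  bilin t /\
  forall (U : lmodType k) (f : V -> W -> U), bilin f ->
    exists h : C -> U, [/\ lin h, (forall v w, h (t v w) = f v w) &
      forall h' : C -> U, lin h' -> (forall v w, h' (t v w) = f v w) ->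
        forall c, h' c = h c].

Record tensorSp (V W : lmodType k) := TensorSp {
  tsp_car : lmodType k;
  tsp_t : V -> W -> tsp_car;
  tsp_ax : is_tensor tsp_t }.

Record tensorAlg (A B : algType k) := TensorAlg {
  tal_car : algType k;
  tal_t : A -> B -> tal_car;
  tal_ax : is_tensor tal_t;
  tal_mul : forall a b c d, tal_t a b * tal_t c d = tal_t (a * c) (b * d);
  tal_one : tal_t 1 1 = 1 }.

Definition alg_morph (A B : algType k) (f : A -> B) : Prop :=
  [/\ lin f, f 1 = 1 & forall x y, f (x * y) = f x * f y].

Definition eps_morph (A : algType k) (e : A -> k) : Prop :=
  [/\ (forall a u v, e (a *: u + v) = a * e u + e v), e 1 = 1 &
      forall x y, e (x * y) = e x * e y].

Definition is_hopf (G : algType k) (GG : tensorAlg G G)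
    (D : G -> tal_car GG) (e : G -> k) (S : G -> G) : Prop :=
  let t := tal_t GG in
  [/\ alg_morph D /\ eps_morph e, lin S,
    (* coassociativity: (Delta (x) id) Delta = (id (x) Delta) Delta, up to the
       canonical associativity isomorphism G(x)(G(x)G) -> (G(x)G)(x)G *)
    (forall (X1 : tensorSp (tal_car GG) G) (X2 : tensorSp G (tal_car GG))
        (D1 : tal_car GG -> tsp_car X1) (D2 : tal_car GG -> tsp_car X2)
        (al : tsp_car X2 -> tsp_car X1),
        lin D1 -> lin D2 -> lin al ->
        (forall a b, D1 (t a b) = tsp_t X1 (D a) b) ->
        (forall a b, D2 (t a b) = tsp_t X2 a (D b)) ->
        (forall a b c, al (tsp_t X2 a (t b c)) = tsp_t X1 (t a b) c) ->
        forall x, al (D2 (D x)) = D1 (D x)),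
    (forall psi : tal_car GG -> G, lin psi ->
        (forall a b, psi (t a b) = e a *: b) -> forall x, psi (D x) = x) /\
    (forall psi : tal_car GG -> G, lin psi ->
        (forall a b, psi (t a b) = e b *: a) -> forall x, psi (D x) = x) &
    (forall mu : tal_car GG -> G, lin mu ->
        (forall a b, mu (t a b) = S a * b) -> forall x, mu (D x) = e x *: 1) /\
    (forall mu : tal_car GG -> G, lin mu ->
        (forall a b, mu (t a b) = a * S b) -> forall x, mu (D x) = e x *: 1)].

Definition left_ore_set (G : algType k) (T : G -> Prop) : Prop :=
  [/\ (forall t, T t -> t <> 0), T 1,
      (forall s t, T s -> T t -> T (s * t)),
      (forall t r, T t -> exists t' r', T t' /\ r' * t = t' * r) &
      (forall t r, T t -> r * t = 0 -> exists t', T t' /\ t' * r = 0)].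

(* i : G -> L is the ring of left fractions T^{-1}G (standard characterization
   of the left Ore localization), as a k-algebra map *)
Definition is_left_loc (G L : algType k) (T : G -> Prop) (i : G -> L) : Prop :=
  [/\ alg_morph i,
      (forall t, T t -> exists u, u * i t = 1 /\ i t * u = 1),
      (forall x, exists t r, T t /\ i t * x = i r) &
      (forall r, i r = 0 <-> exists t, T t /\ t * r = 0)].

Definition is_comod_ext (G : algType k) (GG : tensorAlg G G)
    (D : G -> tal_car GG) (e : G -> k) (L : algType k) (i : G -> L)
    (LG : tensorAlg L G) (DT : L -> tal_car LG) : Prop :=
  let t := tal_t GG in let tL := tal_t LG in
  [/\ alg_morph DT,
    (forall phi : tal_car GG -> tal_car LG, lin phi ->
        (forall a b, phi (t a b) = tL (i a) b) ->
        forall g, DT (i g) = phi (D g)),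
    (* coassociativity: (DT (x) id) DT = (id (x) Delta) DT, up to the canonical
       isomorphism L(x)(G(x)G) -> (L(x)G)(x)G *)
    (forall (X1 : tensorSp (tal_car LG) G) (X2 : tensorSp L (tal_car GG))
        (D1 : tal_car LG -> tsp_car X1) (D2 : tal_car LG -> tsp_car X2)
        (al : tsp_car X2 -> tsp_car X1),
        lin D1 -> lin D2 -> lin al ->
        (forall x g, D1 (tL x g) = tsp_t X1 (DT x) g) ->
        (forall x g, D2 (tL x g) = tsp_t X2 x (D g)) ->
        (forall x a b, al (tsp_t X2 x (t a b)) = tsp_t X1 (tL x a) b) ->
        forall y, al (D2 (DT y)) = D1 (DT y)) &
    (forall psi : tal_car LG -> L, lin psi ->
        (forall x g, psi (tL x g) = e g *: x) -> forall y, psi (DT y) = y)].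

End Defs.

Arguments is_hopf {k G} GG D e S.
Arguments left_ore_set {k G} T.
Arguments is_left_loc {k G L} T i.
Arguments is_comod_ext {k G} GG D e {L} i LG DT.

(* Main.v *)
Require Import Defs.
From mathcomp Require Import all_boot all_algebra.
From HB Require Import structures.
From mathcomp Require Import boolp.
From mathcomp Require Import ring.
Set Implicit Arguments. Unset Strict Implicit. Unset Printing Implicit Defensive.
Import GRing.Theory.
Local Open Scope ring_scope.

Section Tens.
Variables (k : fieldType) (V W : lmodType k).

Definition fsum (U : lmodType k) (f : V -> W -> U) (s : seq (k * (V * W))) : U :=
  \sum_(p <- s) p.1 *: f p.2.1 p.2.2.

Definition teq s1 s2 := forall (U : lmodType k) (f : V -> W -> U),
  bilin f -> fsum f s1 = fsum f s2.

Definition tens := {P : seq (k * (V * W)) -> Prop | exists s, P = teq s}.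
Definition cls s : tens := exist _ (teq s) (ex_intro _ s erefl).
Definition rep (x : tens) : seq (k * (V * W)) := projT1 (cid (proj2_sig x)).

Lemma repK x : cls (rep x) = x.
Proof.
case: x => P HP; rewrite /rep /=; case: cid => s e; subst P.
congr exist; exact: Prop_irrelevance.
Qed.

Lemma cls_eq s1 s2 : teq s1 s2 -> cls s1 = cls s2.
Proof.
move=> h.
have e : teq s1 = teq s2.
  apply: funext => s; apply: propext; split => h' U f bf.
    by rewrite -h // h'.
  by rewrite h // h'.
rewrite /cls; move: (ex_intro _ s1 _) (ex_intro _ s2 _); rewrite e => p1 p2.
congr exist; exact: Prop_irrelevance.
Qed.

Lemma cls_teq s1 s2 : cls s1 = cls s2 -> teq s1 s2.
Proof.
move=> /(congr1 (@proj1_sig _ _)) /= e.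
have : teq s1 s1 by [].
by rewrite e => h U f bf; rewrite (h U f bf).
Qed.

Definition E (U : lmodType k) (f : V -> W -> U) x := fsum f (rep x).

Lemma E_cls (U : lmodType k) (f : V -> W -> U) s : bilin f -> E f (cls s) = fsum f s.
Proof. by move=> bf; rewrite /E (cls_teq (repK (cls s))). Qed.

Lemma tens_ext x y : (forall (U : lmodType k) (f : V -> W -> U), bilin f -> E f x = E f y) -> x = y.
Proof. by move=> h; rewrite -(repK x) -(repK y); apply: cls_eq. Qed.

HB.instance Definition _ := gen_eqMixin tens.
HB.instance Definition _ := gen_choiceMixin tens.

Definition tadd x y := cls (rep x ++ rep y).
Definition topp x := cls [seq (- p.1, p.2) | p <- rep x].
Definition tzero := cls [::].
Definition tscale (a : k) x := cls [seq (a * p.1, p.2) | p <- rep x].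

Section Elems.
Variables (U : lmodType k) (f : V -> W -> U) (bf : bilin f).
Lemma E_add x y : E f (tadd x y) = E f x + E f y.
Proof. by rewrite /tadd E_cls // /fsum big_cat. Qed.
Lemma E_opp x : E f (topp x) = - E f x.
Proof.
rewrite /topp E_cls // /fsum big_map /E /fsum -sumrN.
by apply: eq_bigr => p _; rewrite scaleNr.
Qed.
Lemma E_zero : E f tzero = 0.
Proof. by rewrite /tzero E_cls // /fsum big_nil. Qed.
Lemma E_scale a x : E f (tscale a x) = a *: E f x.
Proof.
rewrite /tscale E_cls // /fsum big_map /E /fsum scaler_sumr.
by apply: eq_bigr => p _; rewrite scalerA.
Qed.
End Elems.

Ltac text := apply: tens_ext => U f bf; match goal with H : bilin _ |- _ => rewrite ?(E_add H, E_opp H, E_zero H, E_scale H) end.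

Lemma taddA : associative tadd. Proof. by move=> x y z; text; rewrite addrA. Qed.
Lemma taddC : commutative tadd. Proof. by move=> x y; text; rewrite addrC. Qed.
Lemma tadd0 : left_id tzero tadd. Proof. by move=> x; text; rewrite add0r. Qed.
Lemma taddN : left_inverse tzero topp tadd. Proof. by move=> x; text; rewrite addNr. Qed.

HB.instance Definition _ := GRing.isZmodule.Build tens taddA taddC tadd0 taddN.

Lemma tscaleA a b v : tscale a (tscale b v) = tscale (a * b) v.
Proof. by text; rewrite scalerA. Qed.
Lemma tscale1 : left_id 1 tscale. Proof. by move=> x; text; rewrite scale1r. Qed.
Lemma tscaleDr : right_distributive tscale +%R.
Proof. by move=> a x y; text; rewrite -/(tadd x y) ?(E_add bf) ?(E_scale bf) scalerDr. Qed.
Lemma tscaleDl v : {morph tscale^~ v: a b / a + b}.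
Proof. by move=> a b; text; rewrite -/(tadd _ _) ?(E_add bf) ?(E_scale bf) scalerDl. Qed.

HB.instance Definition _ := GRing.Zmodule_isLmodule.Build k tens tscaleA tscale1 tscaleDr tscaleDl.

End Tens.

Section Univ.
Variables (k : fieldType) (V W : lmodType k).

Lemma lin0 (A B : lmodType k) (h : A -> B) : lin h -> h 0 = 0.
Proof.
move=> lh; have e := lh 1 0 0; rewrite !scale1r addr0 in e.
by apply: (addrI (h 0)); rewrite addr0 -e.
Qed.

Lemma linD (A B : lmodType k) (h : A -> B) : lin h -> forall x y, h (x + y) = h x + h y.
Proof. by move=> lh x y; have := lh 1 x y; rewrite !scale1r. Qed.

Lemma linZ (A B : lmodType k) (h : A -> B) : lin h -> forall a x, h (a *: x) = a *: h x.
Proof. by move=> lh a x; have := lh a x 0; rewrite !addr0 (lin0 lh) addr0. Qed.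

Lemma linN (A B : lmodType k) (h : A -> B) : lin h -> forall x, h (- x) = - h x.
Proof. by move=> lh x; rewrite -scaleN1r (linZ lh) scaleN1r. Qed.

Lemma lin_fsum (A B : lmodType k) (h : A -> B) (lh : lin h) (V' W' : lmodType k)
   (F : V' -> W' -> A) (s : seq (k * (V' * W'))) :
  h (fsum F s) = fsum (fun a b => h (F a b)) s.
Proof.
rewrite /fsum; elim: s => [|p s IH]; first by rewrite !big_nil lin0.
by rewrite !big_cons lh IH.
Qed.

Definition tt (v : V) (w : W) : tens V W := cls [:: (1, (v, w))].

Lemma E_tt (U : lmodType k) (f : V -> W -> U) v w : bilin f -> E f (tt v w) = f v w.
Proof. by move=> bf; rewrite E_cls // /fsum big_seq1 scale1r. Qed.

Lemma E_lin (U : lmodType k) (f : V -> W -> U) : bilin f -> lin (E f).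
Proof. by move=> bf a x y; rewrite (E_add bf) (E_scale bf). Qed.

Lemma tt_bilin : bilin tt.
Proof.
split=> [v|w] a x y; apply: tens_ext => U f bf;
rewrite ?(E_add bf, E_scale bf, E_tt _ _ bf); case: bf => b1 b2.
  by rewrite b1.
by rewrite b2.
Qed.

Lemma E_sum x : x = fsum tt (rep x).
Proof.
apply: tens_ext => U' f' bf'.
rewrite (lin_fsum (E_lin bf')) [LHS]/E /fsum; apply: eq_bigr => p _.
by rewrite (E_tt _ _ bf').
Qed.

Lemma tt_tensor : is_tensor tt.
Proof.
split; first exact: tt_bilin.
move=> U f bf; exists (E f); split.
- exact: E_lin.
- by move=> v w; rewrite E_tt.
- move=> h' lh' h't c; rewrite (E_sum c) (lin_fsum lh') (lin_fsum (E_lin bf)).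
  by rewrite /fsum; apply: eq_bigr => p _; rewrite h't E_tt.
Qed.

Definition mkT : tensorSp V W := TensorSp tt_tensor.
End Univ.

Section Rep.
Variables (k : fieldType) (V W C : lmodType k) (t : V -> W -> C) (ax : is_tensor t).

Lemma tensor_rep c : exists s, c = fsum t s.
Proof.
case: ax => bt univ.
have [psi [lpsi psit _]] := univ _ _ (tt_bilin V W).
have [h0 [_ _ u0]] := univ _ _ bt.
have e1 : forall c, E t (psi c) = h0 c.
  apply: u0; first by move=> a x y; rewrite lpsi (E_lin bt).
  by move=> v w; rewrite psit E_tt.
have e2 : forall c, c = h0 c by apply: u0.
by exists (rep (psi c)); rewrite -/(E t (psi c)) e1 -e2.
Qed.

Lemma lin_uniq (U : lmodType k) (h1 h2 : C -> U) : lin h1 -> lin h2 ->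
  (forall v w, h1 (t v w) = h2 (t v w)) -> forall c, h1 c = h2 c.
Proof.
move=> l1 l2 e c; have [s ->] := tensor_rep c.
rewrite (lin_fsum l1) (lin_fsum l2) /fsum; apply: eq_bigr => p _; by rewrite e.
Qed.

Lemma lift_ex (U : lmodType k) (f : V -> W -> U) : bilin f ->
  {h : C -> U | lin h /\ forall v w, h (t v w) = f v w}.
Proof.
move=> bf; case: ax => _ univ.
have ex : exists h : C -> U, lin h /\ forall v w, h (t v w) = f v w.
  by have [h [? ? _]] := univ _ _ bf; exists h.
by case: (cid ex) => h hh; exists h.
Qed.

Lemma lift_fsum (U : lmodType k) (f : V -> W -> U) (h : C -> U) s :
  lin h -> (forall v w, h (t v w) = f v w) -> h (fsum t s) = fsum f s.
Proof. move=> lh e; rewrite (lin_fsum lh) /fsum; apply: eq_bigr => p _; by rewrite e. Qed.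
End Rep.

Section LinH.
Variable k : fieldType.
Lemma lin_comp (A B C : lmodType k) (f : A -> B) (g : B -> C) :
  lin f -> lin g -> lin (fun x => g (f x)).
Proof. by move=> lf lg a x y; rewrite lf lg. Qed.
Lemma lin_mull (A : algType k) (c : A) : lin (fun x => c * x).
Proof. by move=> a x y; rewrite mulrDr scalerAr. Qed.
Lemma lin_mulr (A : algType k) (c : A) : lin (fun x => x * c).
Proof. by move=> a x y; rewrite mulrDl scalerAl. Qed.
Lemma lin_id (A : lmodType k) : lin (fun x : A => x).
Proof. by []. Qed.
Lemma lin_fsum_param (A V W U : lmodType k) (F : A -> V -> W -> U) s :
  (forall v w, lin (fun a => F a v w)) -> lin (fun a => fsum (F a) s).
Proof.
move=> h a x y; rewrite /fsum scaler_sumr -big_split /=; apply: eq_bigr => p _.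
by rewrite h scalerDr !scalerA mulrC.
Qed.
Lemma lin_scale_param (A U : lmodType k) (f : A -> k) (u : U) :
  (forall a x y, f (a *: x + y) = a * f x + f y) -> lin (fun x => f x *: u).
Proof. by move=> hf a x y; rewrite hf scalerDl scalerA. Qed.
Lemma lin_mull_f (V : lmodType k) (A : algType k) (f : V -> A) c :
  lin f -> lin (fun x => c * f x).
Proof. by move=> lf a x y; rewrite lf mulrDr scalerAr. Qed.
Lemma lin_mulr_f (V : lmodType k) (A : algType k) (f : V -> A) c :
  lin f -> lin (fun x => f x * c).
Proof. by move=> lf a x y; rewrite lf mulrDl scalerAl. Qed.
Lemma lin_scal_f (V U : lmodType k) (f : V -> U) (c : k) :
  lin f -> lin (fun x => c *: f x).
Proof. by move=> lf a x y; rewrite lf scalerDr !scalerA mulrC. Qed.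
End LinH.

Section Hopf.
Variables (k : fieldType) (G : algType k) (GG : tensorAlg G G)
  (D : G -> tal_car GG) (e : G -> k) (S : G -> G).
Hypothesis hopf : is_hopf GG D e S.
Local Notation t := (tal_t GG).
Let tax := tal_ax GG.

Lemma D_morph : alg_morph D. Proof. by case: hopf => [[]]. Qed.
Lemma D_lin : lin D. Proof. by case: D_morph. Qed.
Lemma e_lin a x y : e (a *: x + y) = a * e x + e y. Proof. by case: hopf => [[_ []]]. Qed.
Lemma e_mul x y : e (x * y) = e x * e y. Proof. by case: hopf => [[_ []]]. Qed.
Lemma e_one : e 1 = 1. Proof. by case: hopf => [[_ []]]. Qed.
Lemma S_lin : lin S. Proof. by case: hopf. Qed.

Lemma t_bil : bilin t. Proof. by case: tax. Qed.

Definition sw x : seq (k * (G * G)) := projT1 (cid (tensor_rep tax (D x))).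
Lemma sw_spec x : D x = fsum t (sw x).
Proof. by rewrite /sw; case: cid. Qed.

Definition SW (U : lmodType k) (F : G -> G -> U) x := fsum F (sw x).

Lemma SW_lift (U : lmodType k) (F : G -> G -> U) (h : tal_car GG -> U) x :
  lin h -> (forall a b, h (t a b) = F a b) -> h (D x) = SW F x.
Proof. by move=> lh e'; rewrite sw_spec (lift_fsum _ lh e'). Qed.

Lemma SW_lin (U U' : lmodType k) (F : G -> G -> U) (h : U -> U') x :
  lin h -> h (SW F x) = SW (fun a b => h (F a b)) x.
Proof. by move=> lh; rewrite /SW (lin_fsum lh). Qed.

Lemma SW_ext (U : lmodType k) (F F' : G -> G -> U) x :
  (forall a b, F a b = F' a b) -> SW F x = SW F' x.
Proof. by move=> h; rewrite /SW /fsum; apply: eq_bigr => p _; rewrite h. Qed.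

Lemma SW_swap (U : lmodType k) (F : G -> G -> G -> G -> U) x y :
  SW (fun a b => SW (fun c d => F a b c d) y) x =
  SW (fun c d => SW (fun a b => F a b c d) x) y.
Proof.
rewrite /SW /fsum.
under eq_bigr do rewrite scaler_sumr.
rewrite exchange_big /=; apply: eq_bigr => q _; rewrite scaler_sumr.
by apply: eq_bigr => p _; rewrite !scalerA mulrC.
Qed.

Lemma SW_eq_lift (U : lmodType k) (F : G -> G -> U) x : bilin F ->
  exists h : tal_car GG -> U, lin h /\ (forall a b, h (t a b) = F a b) /\ h (D x) = SW F x.
Proof.
move=> bF; have [h [lh eh]] := lift_ex tax bF.
by exists h; split; [|split] => //; apply: SW_lift.
Qed.

Lemma SW_antiL x : SW (fun a b => S a * b) x = e x *: 1.
Proof.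
have bF : bilin (fun a b => S a * b).
  split=> [a|b]; first exact: lin_mull.
  exact: (lin_comp S_lin (lin_mulr b)).
have [h [lh [eh <-]]] := SW_eq_lift x bF.
by case: hopf => _ _ _ _ [-> //].
Qed.

Lemma SW_antiR x : SW (fun a b => a * S b) x = e x *: 1.
Proof.
have bF : bilin (fun a b => a * S b).
  split=> [a|b]; last exact: lin_mulr.
  exact: (lin_comp S_lin (lin_mull a)).
have [h [lh [eh <-]]] := SW_eq_lift x bF.
by case: hopf => _ _ _ _ [_ -> //].
Qed.

Lemma SW_counitL0 x : SW (fun a b => e a *: b) x = x.
Proof.
have bF : bilin (fun a (b : G) => e a *: b).
  split=> [a|b]; first by move=> c u v; rewrite scalerDr !scalerA mulrC.
  exact: (lin_scale_param b e_lin).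
have [h [lh [eh <-]]] := SW_eq_lift x bF.
by case: hopf => _ _ _ [-> //].
Qed.

Lemma SW_counitR0 x : SW (fun a b => e b *: a) x = x.
Proof.
have bF : bilin (fun (a : G) b => e b *: a).
  split=> [a|b]; last by move=> c u v; rewrite scalerDr !scalerA mulrC.
  exact: (lin_scale_param a e_lin).
have [h [lh [eh <-]]] := SW_eq_lift x bF.
by case: hopf => _ _ _ [_ -> //].
Qed.

Lemma SW_counitL (U : lmodType k) (h : G -> U) x : lin h ->
  SW (fun a b => e a *: h b) x = h x.
Proof.
move=> lh; rewrite -{2}(SW_counitL0 x) (SW_lin _ _ lh).
by apply: SW_ext => a b; rewrite (linZ lh).
Qed.

Lemma SW_counitR (U : lmodType k) (h : G -> U) x : lin h ->
  SW (fun a b => e b *: h a) x = h x.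
Proof.
move=> lh; rewrite -{2}(SW_counitR0 x) (SW_lin _ _ lh).
by apply: SW_ext => a b; rewrite (linZ lh).
Qed.

Lemma fsum_mul (s1 s2 : seq (k * (G * G))) :
  fsum t s1 * fsum t s2 = fsum (fun a b => fsum (fun c d => t (a * c) (b * d)) s2) s1.
Proof.
rewrite /fsum mulr_suml; apply: eq_bigr => p _.
rewrite mulr_sumr scaler_sumr; apply: eq_bigr => q _.
by rewrite -scalerAl -scalerAr tal_mul.
Qed.

Lemma SW_mul (U : lmodType k) (F : G -> G -> U) x y : bilin F ->
  SW F (x * y) = SW (fun a1 a2 => SW (fun b1 b2 => F (a1 * b1) (a2 * b2)) y) x.
Proof.
move=> bF; have [h [lh [eh <-]]] := SW_eq_lift (x * y) bF.
case: D_morph => _ _ ->; rewrite !sw_spec fsum_mul (lin_fsum lh) /SW.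
rewrite /fsum; apply: eq_bigr => p _; congr (_ *: _).
change (h (fsum (fun c d => t (p.2.1 * c) (p.2.2 * d)) (sw y)) =
  fsum (fun c d => F (p.2.1 * c) (p.2.2 * d)) (sw y)).
by rewrite (lin_fsum lh) /fsum; apply: eq_bigr => q _; rewrite eh.
Qed.


Definition trilin (U : lmodType k) (m : G -> G -> G -> U) :=
  [/\ (forall b c, lin (fun a => m a b c)), (forall a c, lin (fun b => m a b c)) &
      (forall a b, lin (m a b))].

Lemma lift_rep_lin (A U : lmodType k) (F : A -> G -> G -> U) (H : A -> tal_car GG -> U) :
  (forall a, lin (H a)) -> (forall a b c, H a (t b c) = F a b c) ->
  (forall b c, lin (fun a => F a b c)) -> forall q, lin (fun a => H a q).
Proof.
move=> lH eH lF q; have [s ->] := tensor_rep tax q.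
have E1 : forall a, H a (fsum t s) = fsum (F a) s.
  by move=> a; rewrite (lift_fsum _ (lH a) (eH a)).
by move=> al x y; rewrite !E1; apply: lin_fsum_param.
Qed.

Lemma SW_coassoc (U : lmodType k) (m : G -> G -> G -> U) x : trilin m ->
  SW (fun a c => SW (fun a1 a2 => m a1 a2 c) a) x =
  SW (fun a b => SW (fun b1 b2 => m a b1 b2) b) x.
Proof.
case=> m1 m2 m3.
pose X1 := mkT (tal_car GG) G.
pose X2 := mkT G (tal_car GG).
have tt1 := tt_bilin (tal_car GG) G.
have tt2 := tt_bilin G (tal_car GG).
have bD1 : bilin (fun a b => @tt _ (tal_car GG) G (D a) b).
  split=> [a|b]; first exact: tt1.1.
  exact: (lin_comp D_lin (tt1.2 b)).
have [D1 [lD1 eD1]] := lift_ex tax bD1.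
have bD2 : bilin (fun a b => @tt _ G (tal_car GG) a (D b)).
  split=> [a|b]; last exact: tt2.2.
  exact: (lin_comp D_lin (tt2.1 a)).
have [D2 [lD2 eD2]] := lift_ex tax bD2.
have bAl : forall a, bilin (fun b c => @tt _ (tal_car GG) G (t a b) c).
  move=> a; split=> [b|c]; first exact: tt1.1.
  exact: (lin_comp (t_bil.1 a) (tt1.2 c)).
pose Al a := sval (lift_ex tax (bAl a)).
have lAl : forall a, lin (Al a) by move=> a; rewrite /Al; case: lift_ex => h [].
have eAl : forall a b c, Al a (t b c) = tt (t a b) c.
  by move=> a; rewrite /Al; case: lift_ex => h [].
have bAl2 : bilin (fun a q => Al a q).
  split=> [a|q]; first exact: lAl.
  apply: (lift_rep_lin lAl eAl) => b c.
  exact: (lin_comp (t_bil.2 b) (tt1.2 c)).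
have [al [lal eal]] := lift_ex (tt_tensor G (tal_car GG)) bAl2.
have bM1 : forall c, bilin (fun a1 a2 => m a1 a2 c).
  by move=> c; split=> [a1|a2]; [apply: m2|apply: m1].
pose M1 c := sval (lift_ex tax (bM1 c)).
have lM1 : forall c, lin (M1 c) by move=> c; rewrite /M1; case: lift_ex => h [].
have eM1 : forall c a b, M1 c (t a b) = m a b c.
  by move=> c; rewrite /M1; case: lift_ex => h [].
have bP : bilin (fun p c => M1 c p).
  split=> [p|c]; last exact: lM1.
  by apply: (lift_rep_lin lM1 eM1) => a b; apply: m3.
have [P1 [lP1 eP1]] := lift_ex (tt_tensor (tal_car GG) G) bP.
have bM2 : forall a, bilin (fun b1 b2 => m a b1 b2).
  by move=> a; split=> [b1|b2]; [apply: m3|apply: m2].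
pose M2 a := sval (lift_ex tax (bM2 a)).
have lM2 : forall a, lin (M2 a) by move=> a; rewrite /M2; case: lift_ex => h [].
have eM2 : forall a b c, M2 a (t b c) = m a b c.
  by move=> a; rewrite /M2; case: lift_ex => h [].
have H := hopf.
case: H => _ _ coas _ _.
have := coas X1 X2 D1 D2 al lD1 lD2 lal eD1 eD2.
move=> /(_ _) H.
have Hc : forall a b c, al (tt a (t b c)) = tt (t a b) c by move=> a b c; rewrite eal eAl.
have := H Hc x => {}H.
have L : P1 (D1 (D x)) = SW (fun a c => SW (fun a1 a2 => m a1 a2 c) a) x.
  apply: (SW_lift (h := fun y => P1 (D1 y))); first exact: lin_comp.
  by move=> a c; rewrite eD1 eP1; apply: SW_lift.
rewrite -L -H.
apply: (SW_lift (h := fun y => P1 (al (D2 y)))).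
  by apply: lin_comp => //; apply: lin_comp.
move=> a b; rewrite eD2.
have -> : P1 (al (tt a (D b))) = M2 a (D b).
  apply: (lin_uniq tax (h1 := fun q => P1 (al (tt a q)))).
  - apply: lin_comp; last exact: lP1.
    exact: (lin_comp (tt2.1 a) lal).
  - exact: lM2.
  - by move=> u v; rewrite Hc eP1 eM1 eM2.
by apply: SW_lift.
Qed.

Lemma lin_S_f (V : lmodType k) (f : V -> G) : lin f -> lin (fun x => S (f x)).
Proof. by move=> lf; apply: lin_comp lf S_lin. Qed.

Lemma SW_antiRg (c d : G) x :
  SW (fun a b => c * a * S b * d) x = e x *: (c * d).
Proof.
have lh : lin (fun y => c * y * d) by apply: lin_mulr_f; apply: lin_mull_f.
transitivity ((fun y => c * y * d) (SW (fun a b => a * S b) x)).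
  by rewrite (SW_lin _ _ lh); apply: SW_ext => a b /=; rewrite !mulrA.
by rewrite SW_antiR /= -scalerAr -scalerAl mulr1.
Qed.

Ltac linauto := first [ exact: lin_id | apply: lin_mulr_f; linauto
  | apply: lin_mull_f; linauto | apply: lin_S_f; linauto | apply: lin_scal_f; linauto ].

Lemma S_antimul a b : S (a * b) = S b * S a.
Proof.
have step1 : S b * S a = SW (fun a1 a2 => SW (fun b1 b2 =>
   SW (fun u1 u2 => SW (fun v1 v2 => S (u1 * v1) * (u2 * v2) * (S b2 * S a2)) b1) a1) b) a.
  transitivity (SW (fun a1 a2 => e a1 *: (S b * S a2)) a).
    by rewrite (SW_counitL (h := fun y => S b * S y)) //; linauto.
  apply: SW_ext => a1 a2.
  transitivity (SW (fun b1 b2 => e b1 *: (e a1 *: (S b2 * S a2))) b).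
    by rewrite (SW_counitL (h := fun y => e a1 *: (S y * S a2))) //; linauto.
  apply: SW_ext => b1 b2.
  have bF : bilin (fun u v => S u * v * (S b2 * S a2)) by split => ?; linauto.
  rewrite -(SW_mul _ _ bF).
  rewrite -(@SW_lin _ _ _ (fun y => y * (S b2 * S a2))); last by linauto.
  by rewrite SW_antiL e_mul -scalerAl mul1r scalerA mulrC.
rewrite step1.
transitivity (SW (fun a1 a2 => SW (fun u1 u2 => S (u1 * b) * u2 * S a2) a1) a); last first.
  apply: SW_ext => a1 a2.
  rewrite (SW_swap (fun b1 b2 u1 u2 => SW (fun v1 v2 => S (u1 * v1) * (u2 * v2) * (S b2 * S a2)) b1)).
  apply: SW_ext => u1 u2.
  rewrite (SW_coassoc (m := fun v1 v2 b2 => S (u1 * v1) * (u2 * v2) * (S b2 * S a2))); last first.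
    by split => *; linauto.
  symmetry; transitivity (SW (fun v1 b' => e b' *: (S (u1 * v1) * u2 * S a2)) b).
    apply: SW_ext => v1 b'.
    rewrite -SW_antiRg; apply: SW_ext => v2 b2; by rewrite !mulrA.
  by rewrite (SW_counitR (h := fun v1 => S (u1 * v1) * u2 * S a2)) //; linauto.
rewrite (SW_coassoc (m := fun u1 u2 a2 => S (u1 * b) * u2 * S a2)); last first.
  by split => *; linauto.
transitivity (SW (fun u1 a' => e a' *: S (u1 * b)) a).
  by rewrite (SW_counitR (h := fun u1 => S (u1 * b))) //; linauto.
apply: SW_ext => u1 a'.
transitivity (SW (fun u2 a2 => S (u1 * b) * u2 * S a2 * 1) a'); first by rewrite SW_antiRg mulr1.
by apply: SW_ext => ? ?; rewrite mulr1.
Qed.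

Lemma SW_one (U : lmodType k) (F : G -> G -> U) : bilin F -> SW F 1 = F 1 1.
Proof.
move=> bF; have [h [lh [eh <-]]] := SW_eq_lift 1 bF.
by case: D_morph => _ -> _; rewrite -tal_one eh.
Qed.

Lemma S_one : S 1 = 1.
Proof.
have bF : bilin (fun a b => a * S b).
  split=> [a|b]; last exact: lin_mulr.
  exact: (lin_comp S_lin (lin_mull a)).
have := SW_antiR 1; rewrite SW_one // e_one scale1r mul1r; exact.
Qed.

Lemma e_zero : e 0 = 0.
Proof.
have := e_lin 1 0 0; rewrite scale1r addr0 mul1r => h.
by apply: (addrI (e 0)); rewrite addr0 -h.
Qed.

Lemma e_add x y : e (x + y) = e x + e y.
Proof. by rewrite -[x]scale1r e_lin mul1r scale1r. Qed.

Lemma e_opp x : e (- x) = - e x.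
Proof. by have := e_lin (-1) x 0; rewrite addr0 e_zero addr0 scaleN1r mulN1r. Qed.

Lemma e_scale a x : e (a *: x) = a * e x.
Proof. by have := e_lin a x 0; rewrite addr0 e_zero addr0. Qed.

End Hopf.

Section Main.
Variables (k : fieldType) (G : algType k) (GG : tensorAlg G G)
  (D : G -> tal_car GG) (e : G -> k) (S : G -> G).
Hypothesis hopf : is_hopf GG D e S.
Variables (T : G -> Prop) (L : algType k) (i : G -> L) (LG : tensorAlg L G)
  (DT : L -> tal_car LG).
Hypothesis HT : left_ore_set T.
Hypothesis Hi : is_left_loc T i.
Hypothesis HDT : is_comod_ext GG D e i LG DT.

Local Notation t := (tal_t GG).
Local Notation tL := (tal_t LG).
Let lax := tal_ax LG.
Let tLbil : bilin tL. Proof. by case: lax. Qed.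

Lemma i_lin : lin i. Proof. by case: Hi => [[]]. Qed.
Lemma i_one : i 1 = 1. Proof. by case: Hi => [[]]. Qed.
Lemma i_mul a b : i (a * b) = i a * i b. Proof. by case: Hi => [[]]. Qed.
Lemma i_sub a b : i (a - b) = i a - i b.
Proof. by rewrite (linD i_lin) (linN i_lin). Qed.
Lemma i_scale c a : i (c *: a) = c *: i a.
Proof. exact: (linZ i_lin). Qed.

Lemma DT_lin : lin DT. Proof. by case: HDT => [[]]. Qed.
Lemma DT_one : DT 1 = 1. Proof. by case: HDT => [[]]. Qed.
Lemma DT_mul x y : DT (x * y) = DT x * DT y. Proof. by case: HDT => [[]]. Qed.

Lemma DT_i g : DT (i g) = SW D (fun a b => tL (i a) b) g.
Proof.
have bF : bilin (fun a b => tL (i a) b).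
  split=> [a|b]; first exact: tLbil.1.
  exact: (lin_comp i_lin (tLbil.2 b)).
have [h [lh [eh <-]]] := SW_eq_lift D g bF.
by case: HDT => _ H _ _; apply: H.
Qed.

Lemma tL_mul x g y h : tL x g * tL y h = tL (x * y) (g * h).
Proof. exact: tal_mul. Qed.

Lemma L_nontriv : (1 : L) != 0. Proof. exact: oner_neq0. Qed.

Lemma eT_neq0 s : T s -> e s != 0.
Proof.
move=> Ts; case: Hi => _ /(_ s Ts) [u [ui iu]] _ _.
have bF : bilin (fun (x : L) (g : G) => x * i (S g)).
  split=> [x|g]; last exact: lin_mulr.
  exact: (lin_comp (S_lin hopf) (lin_comp i_lin (lin_mull x))).
have [F [lF eF]] := lift_ex lax bF.
have key : forall z, F (z * DT (i s)) = e s *: F z.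
  apply: (@lin_uniq _ _ _ _ _ lax _ (fun z => F (z * DT (i s))) (fun z => e s *: F z)).
  - exact: (lin_comp (lin_mulr _) lF).
  - exact: (lin_scal_f _ lF).
  move=> x g; rewrite DT_i.
  rewrite (SW_lin _ _ _ (lin_mull (tL x g))) (SW_lin _ _ _ lF).
  have lh : lin (fun y => x * i y * i (S g)).
    by apply: lin_mulr_f; apply: lin_mull_f; exact: i_lin.
  transitivity (SW D (fun a b => (fun y => x * i y * i (S g)) (a * S b)) s).
    apply: SW_ext => a b; rewrite tL_mul eF (S_antimul hopf) !i_mul /=.
    by rewrite !mulrA.
  rewrite -(SW_lin _ _ _ lh) (SW_antiR hopf) /= i_scale i_one -scalerAr -scalerAl mulr1.
  by rewrite eF.
have := key (DT u); rewrite -DT_mul ui DT_one.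
rewrite -tal_one eF (S_one hopf) i_one mulr1.
move=> h; apply/eqP => e0; move: h; rewrite e0 scale0r => /eqP; apply/negP; exact: L_nontriv.
Qed.

Lemma ore s r : T s -> exists c d, T c /\ d * s = c * r.
Proof. by case: HT => _ _ _ H _ Ts; have [c [d [Tc h]]] := H s r Ts; exists c, d. Qed.

Lemma T_mul a b : T a -> T b -> T (a * b).
Proof. by case: HT => _ _ H _ _; apply: H. Qed.

Lemma T_one : T 1. Proof. by case: HT. Qed.

Lemma ker_e r : i r = 0 -> e r = 0.
Proof.
move=> h; case: Hi => _ _ _ /(_ r) [/(_ h) [q [Tq qr]] _].
have := congr1 e qr; rewrite (e_mul hopf) (e_zero hopf) => /eqP.
by rewrite mulf_eq0 (negbTE (eT_neq0 Tq)) /= => /eqP.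
Qed.

Lemma frac x : exists sr : G * G, T sr.1 /\ i sr.1 * x = i sr.2.
Proof. by case: Hi => _ _ /(_ x) [s [r h]] _; exists (s, r). Qed.

Definition fr x := projT1 (cid (frac x)).
Lemma fr_spec x : T (fr x).1 /\ i (fr x).1 * x = i (fr x).2.
Proof. by rewrite /fr; case: cid. Qed.

Definition epsL x := e (fr x).2 / e (fr x).1.

Lemma ore_wd x s r s2 r2 : T s -> i s * x = i r -> T s2 -> i s2 * x = i r2 ->
  e r * e s2 = e r2 * e s.
Proof.
move=> Ts hs Ts2 hs2.
have [c [d [Tc h]]] := ore s Ts2.
have h1 : i (c * r - d * r2) = 0.
  rewrite i_sub !i_mul -hs -hs2 !mulrA -!i_mul h; exact: subrr.
have h2 := ker_e h1; move: h2; rewrite (e_add hopf) (e_opp hopf) !(e_mul hopf) => /eqP.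
rewrite subr_eq0 => /eqP h3.
have h4 := congr1 e h; rewrite !(e_mul hopf) in h4.
apply: (mulfI (eT_neq0 Tc)).
rewrite mulrA h3; transitivity (e d * e s2 * e r2); first by ring.
by rewrite h4; ring.
Qed.

Lemma epsL_spec x s r : T s -> i s * x = i r -> epsL x = e r / e s.
Proof.
move=> Ts hs; rewrite /epsL; case: (fr_spec x) => T0 h0.
have h := ore_wd T0 h0 Ts hs.
have n0 := eT_neq0 T0; have n1 := eT_neq0 Ts.
have -> : e (fr x).2 = e r * e (fr x).1 / e s.
  by rewrite -h mulfK.
by field; apply/andP.
Qed.

Lemma epsL_i a : epsL (i a) = e a.
Proof. by rewrite (epsL_spec (s := 1) (r := a) T_one) ?i_one ?mul1r // (e_one hopf) divr1. Qed.

Lemma epsL_one : epsL 1 = 1.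
Proof. by rewrite -i_one epsL_i (e_one hopf). Qed.

Lemma epsL_lin a x y : epsL (a *: x + y) = a * epsL x + epsL y.
Proof.
case: (fr_spec x) => Ts hs; case: (fr_spec y) => Ts' hs'.
set s := (fr x).1 in Ts hs *; set r := (fr x).2 in hs *.
set s' := (fr y).1 in Ts' hs' *; set r' := (fr y).2 in hs' *.
have [c [d [Tc h]]] := ore s' Ts.
have ex : i (c * s') * (a *: x + y) = i (a *: (d * r) + c * r').
  rewrite (linD i_lin) i_scale !i_mul -hs -hs' mulrDr -scalerAr.
  by rewrite !mulrA -!i_mul h.
rewrite (epsL_spec (T_mul Tc Ts') ex) (epsL_spec Ts hs) (epsL_spec Ts' hs').
rewrite (e_add hopf) (e_scale hopf) !(e_mul hopf).
have h4 := congr1 e h; rewrite !(e_mul hopf) in h4.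
have n0 := eT_neq0 Tc; have n1 := eT_neq0 Ts; have n2 := eT_neq0 Ts'.
have -> : e d = e c * e s' / e s by rewrite -h4 mulfK.
by field; rewrite n0 n1 n2.
Qed.

Lemma epsL_mul x y : epsL (x * y) = epsL x * epsL y.
Proof.
case: (fr_spec x) => Ts hs; case: (fr_spec y) => Ts' hs'.
set s := (fr x).1 in Ts hs *; set r := (fr x).2 in hs *.
set s' := (fr y).1 in Ts' hs' *; set r' := (fr y).2 in hs' *.
have [c [d [Tc h]]] := ore r Ts'.
have ex : i (c * s) * (x * y) = i (d * r').
  by rewrite i_mul -mulrA (mulrA (i s)) hs mulrA -i_mul -h i_mul -mulrA hs' -i_mul.
rewrite (epsL_spec (T_mul Tc Ts) ex) (epsL_spec Ts hs) (epsL_spec Ts' hs').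
rewrite !(e_mul hopf).
have h4 := congr1 e h; rewrite !(e_mul hopf) in h4.
have n0 := eT_neq0 Tc; have n1 := eT_neq0 Ts; have n2 := eT_neq0 Ts'.
have -> : e d = e c * e r / e s' by rewrite -h4 mulfK.
by field; rewrite n0 n1 n2.
Qed.

Lemma left_inv s : T s -> exists v, v * s = 1.
Proof.
move=> Ts; case: Hi => _ /(_ s Ts) [u [ui iu]] _ _.
have bF : bilin (fun (x : L) (g : G) => epsL x *: g).
  split=> [x|g]; first by move=> a u1 w; rewrite scalerDr !scalerA mulrC.
  exact: (lin_scale_param g epsL_lin).
have [Psi [lP eP]] := lift_ex lax bF.
have Pmul : forall p q, Psi (p * q) = Psi p * Psi q.
  move=> p q.
  apply: (@lin_uniq _ _ _ _ _ lax _ (fun p => Psi (p * q)) (fun p => Psi p * Psi q)).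
  - exact: (lin_comp (lin_mulr q) lP).
  - exact: (lin_mulr_f _ lP).
  move=> x g.
  apply: (@lin_uniq _ _ _ _ _ lax _ (fun q => Psi (tL x g * q)) (fun q => Psi (tL x g) * Psi q)).
  - exact: (lin_comp (lin_mull _) lP).
  - exact: (lin_mull_f _ lP).
  by move=> y h; rewrite tL_mul !eP epsL_mul -scalerAl -scalerAr scalerA.
have Pi : Psi (DT (i s)) = s.
  rewrite DT_i (SW_lin _ _ _ lP) -[RHS](SW_counitL0 hopf s).
  by apply: SW_ext => a b; rewrite eP epsL_i.
have P1 : Psi 1 = 1 by rewrite -tal_one eP epsL_one scale1r.
by exists (Psi (DT u)); rewrite -{1}Pi -Pmul -DT_mul ui DT_one P1.
Qed.

Lemma i_inj : injective i.
Proof.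
move=> a b h.
have h0 : i (a - b) = 0 by rewrite i_sub h subrr.
case: Hi => _ _ _ /(_ (a - b)) [/(_ h0) [q [Tq qr]] _].
have [v vq] := left_inv Tq.
apply/eqP; rewrite -subr_eq0; apply/eqP.
by rewrite -[a - b]mul1r -vq -mulrA qr mulr0.
Qed.

Lemma i_surj x : exists a, i a = x.
Proof.
case: (fr_spec x) => Ts hs.
have [v vs] := left_inv Ts.
exists (v * (fr x).2); rewrite i_mul -hs mulrA -i_mul vs i_one mul1r //.
Qed.

Lemma i_bij : bijective i.
Proof.
pose j x := projT1 (cid (i_surj x)).
have ij : forall x, i (j x) = x by move=> x; rewrite /j; case: cid.
exists j => [a|x]; last exact: ij.
by apply: i_inj; rewrite ij.
Qed.

End Main.

Theorem mainTheorem6 (k : fieldType) (G : algType k) (GG : tensorAlg G G)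
    (D : G -> tal_car GG) (e : G -> k) (S : G -> G)
    (hopf : is_hopf GG D e S)
    (T : G -> Prop) (HT : left_ore_set T)
    (L : algType k) (i : G -> L) (Hi : is_left_loc T i)
    (LG : tensorAlg L G) :
  ~ (~ bijective i /\ exists DT : L -> tal_car LG, is_comod_ext GG D e i LG DT).
Proof.
case=> nb [DT HDT]; apply: nb; exact: (i_bij hopf HT Hi HDT).
Qed.
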